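(* Fix $\varepsilon>0$, $\beta\in(0,1)$, an even integer $d>4(e^{2\varepsilon}-1)^2\ln\frac2\beta$, and $\varepsilon$-private randomizers $R_1,\dots,R_n:[d]\to\mathcal Y$. Let $v=(e^{2\varepsilon}-1)\sqrt{\frac4d\ln\frac2\beta}$. If $H$ is chosen uniformly among subsets of $[d]$ of size $d/2$, then with probability at least $5/6$ over $H$, both of the following hold: \[ \forall i\in[n]:\ \Pr\left[R_i(\mathbf U)\in\mathit{Leak}(v,H,R_i)\right]<6\beta n,\qquad \forall i\in[n]:\ \Pr\left[R_i(\mathbf U_H)\in\mathit{Leak}(v,H,R_i)\right]<6e^{\varepsilon}\beta n . \]
   Context: $\mathcal Y$ is a countable message set. A randomizer $R:[d]\to\mathcal Y$ is $\varepsilon$-private if for all $x,x'\in[d]$ and all $Y\subseteq\mathcal Y$, $\Pr[R(x)\in Y]\le e^{\varepsilon}\Pr[R(x')\in Y]$. $\mathbf U$ is the uniform distribution on $[d]$; for $H\subseteq[d]$, $\mathbf U_H$ is the uniform distribution on $H$; $R(\mathbf U)$, $R(\mathbf U_H)$ are the distributions of $R(\hat x)$ for $\hat x\sim\mathbf U$, resp. $\hat x\sim\mathbf U_H$. For $H\subset[d]$ with $|H|=d/2$, a message $y$ is $v$-leaky with respect to $H,R$ if $\left|\ln\frac{\Pr[R(\mathbf U_H)=y]}{\Pr[R(\mathbf U)=y]}\right|>v$ (messages with $\Pr[R(\mathbf U)=y]=0$ are regarded as not leaky), and $\mathit{Leak}(v,H,R)$ is the set of $y\in\mathcal Y$ that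 are $v$-leaky with respect to $H,R$. *)

(* Defs.v *)
From Stdlib Require Import Reals List Arith ClassicalEpsilon.
Import ListNotations.
Open Scope R_scope.

Definition Sum (f : nat -> R) : R :=
  epsilon (inhabits 0%R) (fun l => infinite_sum f l).

(* Message set Y = nat (a countable set).  Input set [d] = {0,...,d-1}.
   A randomizer Rz : [d] -> Y is given by its probability mass functions:
   Rz x y = Pr[R(x) = y]. *)
Definition is_randomizer (d : nat) (Rz : nat -> nat -> R) : Prop :=
  forall x, (x < d)%nat -> (forall y, 0 <= Rz x y) /\ infinite_sum (Rz x) 1.

Definition PrIn (p : nat -> R) (S : nat -> bool) : R :=
  Sum (fun y => if S y then p y else 0).

Definition eps_private (d : nat) (eps : R) (Rz : nat -> nat -> R) : Prop :=
  forall (x x' : nat) (S : nat -> bool), (x < d)%nat -> (x' < d)%nat ->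
    PrIn (Rz x) S <= exp eps * PrIn (Rz x') S.

Definition fsum (d : nat) (f : nat -> R) : R :=
  fold_right Rplus 0 (map f (seq 0 d)).

(* Subsets H of [d] are characteristic vectors h : list bool of length d;
   x \in H  iff  nth x h false = true. *)
Definition memH (h : list bool) (x : nat) : bool := nth x h false.

Definition card_true (h : list bool) : nat := length (filter (fun b => b) h).

Fixpoint bool_lists (n : nat) : list (list bool) :=
  match n with
  | O => [nil]
  | S m => map (cons true) (bool_lists m) ++ map (cons false) (bool_lists m)
  end.

Definition half_subsets (d : nat) : list (list bool) :=
  filter (fun h => Nat.eqb (card_true h) (d / 2)) (bool_lists d).

Definition pU (d : nat) (Rz : nat -> nat -> R) (y : nat) : R :=
  / INR d * fsum d (fun x => Rz x y).

Definition pUH (d : nat) (Rz : nat -> nat -> R) (h : list bool) (y : nat) : R :=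
  / INR (card_true h) * fsum d (fun x => if memH h x then Rz x y else 0).

(* y is v-leaky w.r.t. H, R : |ln(Pr[R(U_H)=y]/Pr[R(U)=y])| > v, where messages
   with Pr[R(U)=y] = 0 are not leaky, and ln 0 = -infinity (so a ratio 0 is leaky). *)
Definition leaky (d : nat) (v : R) (h : list bool) (Rz : nat -> nat -> R) (y : nat) : Prop :=
  0 < pU d Rz y /\
  (pUH d Rz h y = 0 \/ Rabs (ln (pUH d Rz h y / pU d Rz y)) > v).

Definition Leak (d : nat) (v : R) (h : list bool) (Rz : nat -> nat -> R) : nat -> bool :=
  fun y => if excluded_middle_informative (leaky d v h Rz y) then true else false.

Definition to_bool (P : Prop) : bool :=
  if excluded_middle_informative P then true else false.

Definition PrH (d : nat) (P : list bool -> Prop) : R :=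
  INR (length (filter (fun h => to_bool (P h)) (half_subsets d)))
  / INR (length (half_subsets d)).

(* Main.v *)
Require Import Defs.
From Coquelicot Require Import Coquelicot.
From Stdlib Require Import Reals Lra Lia List Arith ClassicalEpsilon Classical.
Import ListNotations.
Open Scope R_scope.

Lemma exp_le_inc x y : x <= y -> exp x <= exp y.
Proof. intros [H|H]. left; apply exp_increasing; auto. subst; lra. Qed.

Lemma den_pos p u : 0 <= p <= 1 -> 0 < 1 - p + p * exp u.
Proof.
  intros Hp. pose proof (exp_pos u).
  destruct (Req_dec p 1) as [->|Hne]. lra.
  assert (0 <= p * exp u) by (apply Rmult_le_pos; lra). lra.
Qed.

Definition qf p u := p * exp u / (1 - p + p * exp u).

Lemma qf_derive p u : 0 <= p <= 1 -> is_derive (qf p) u (qf p u * (1 - qf p u)).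
Proof.
  intros Hp. pose proof (den_pos p u Hp). unfold qf.
  auto_derive. lra. field. lra.
Qed.

Lemma qf_bound p u : 0 <= p <= 1 -> 0 <= qf p u <= 1.
Proof.
  intros Hp. pose proof (den_pos p u Hp). pose proof (exp_pos u). unfold qf.
  split. apply Rmult_le_pos. apply Rmult_le_pos; lra. left; apply Rinv_0_lt_compat; lra.
  apply Rmult_le_reg_r with (1 - p + p * exp u). lra.
  field_simplify; lra.
Qed.

Lemma qf0 p : 0 <= p <= 1 -> qf p 0 = p.
Proof. intros. unfold qf. rewrite exp_0. field_simplify; lra. Qed.

Lemma qf_dev p u : 0 <= p <= 1 -> (0 <= u -> qf p u - p <= u / 4) /\ (u <= 0 -> qf p u - p >= u / 4).
Proof.
  intros Hp.
  destruct (MVT_gen (qf p) 0 u (fun x => qf p x * (1 - qf p x))) as [c [Hc Heq]].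
  - intros; apply qf_derive; auto.
  - intros. apply continuity_pt_filterlim. apply (ex_derive_continuous (V:=R_NormedModule)). eexists; apply qf_derive; auto.
  - rewrite qf0 in Heq by auto.
    pose proof (qf_bound p c Hp).
    assert (0 <= qf p c * (1 - qf p c) <= 1/4).
    { split. apply Rmult_le_pos; lra. pose proof (pow2_ge_0 (qf p c - 1/2)). nra. }
    set (k := qf p c * (1 - qf p c)) in *.
    replace (u - 0) with u in Heq by ring.
    split; intros; rewrite Heq; nra.
Qed.

Lemma hoeff_core p u : 0 <= p <= 1 -> exp (- p * u) * (1 - p + p * exp u) <= exp (u^2 / 8).
Proof.
  intros Hp.
  set (g := fun x => x^2/8 + p * x - ln (1 - p + p * exp x)).
  assert (Hd : forall x, is_derive g x (x/4 + p - qf p x)).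
  { intros x. pose proof (den_pos p x Hp). unfold g, qf. auto_derive. lra. field. lra. }
  destruct (MVT_gen g 0 u (fun x => x/4 + p - qf p x)) as [c [Hc Heq]].
  - intros; apply Hd.
  - intros. apply continuity_pt_filterlim. apply (ex_derive_continuous (V:=R_NormedModule)). eexists; apply Hd.
  - assert (Hg0 : g 0 = 0). { unfold g; cbv beta. rewrite exp_0. replace (1 - p + p*1) with 1 by ring. rewrite ln_1. simpl; lra. }
    assert (Hgu : g u >= 0).
    { destruct (Rle_dec 0 u).
      - rewrite Rmin_left, Rmax_right in Hc by lra.
        destruct (qf_dev p c Hp) as [H1 _]. specialize (H1 ltac:(lra)). nra.
      - rewrite Rmin_right, Rmax_left in Hc by lra.
        destruct (qf_dev p c Hp) as [_ H1]. specialize (H1 ltac:(lra)). nra. }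
    unfold g in Hgu. pose proof (den_pos p u Hp).
    assert (ln (1 - p + p * exp u) <= u^2/8 + p*u) by lra.
    rewrite <- (exp_ln (1 - p + p * exp u)) by lra.
    rewrite <- exp_plus. apply exp_le_inc. lra.
Qed.

Lemma hoeff2 p a b lam : 0 <= p <= 1 -> p * a + (1 - p) * b = 0 ->
  p * exp (lam * a) + (1 - p) * exp (lam * b) <= exp (lam^2 * (a - b)^2 / 8).
Proof.
  intros Hp Hm.
  assert (Hb : b = - p * (a - b)) by nra.
  assert (Ha : a = (1 - p) * (a - b)) by nra.
  pose proof (hoeff_core p (lam * (a - b)) Hp).
  replace (lam^2 * (a-b)^2/8) with ((lam*(a-b))^2/8) by field.
  eapply Rle_trans; [|exact H].
  replace (lam * a) with (lam * b + lam * (a - b)) by ring.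
  rewrite exp_plus.
  assert (Hlb: lam * b = - p * (lam * (a - b))) by (transitivity (lam * (- p * (a - b))); [now rewrite <- Hb | ring]).
  rewrite Hlb.
  right; ring.
Qed.

Fixpoint sel (h : list bool) (c : nat -> R) : R :=
  match h with
  | [] => 0
  | b :: t => (if b then c 0%nat else 0) + sel t (fun i => c (S i))
  end.

Fixpoint Ssum (N : nat) (c : nat -> R) : R :=
  match N with
  | O => 0
  | S n => c 0%nat + Ssum n (fun i => c (S i))
  end.

Definition subs (N m : nat) : list (list bool) :=
  filter (fun h => Nat.eqb (card_true h) m) (bool_lists N).

Definition Lsum {A : Type} (f : A -> R) (l : list A) : R :=
  fold_right (fun a r => f a + r) 0 l.

Lemma Lsum_app {A} (f : A -> R) l1 l2 : Lsum f (l1 ++ l2) = Lsum f l1 + Lsum f l2.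
Proof. induction l1; simpl; [ring| rewrite IHl1; ring]. Qed.

Lemma Lsum_map {A B} (f : B -> R) (g : A -> B) l : Lsum f (map g l) = Lsum (fun a => f (g a)) l.
Proof. induction l; simpl; auto. rewrite IHl; auto. Qed.

Lemma Lsum_scal {A} (f : A -> R) k l : Lsum (fun a => k * f a) l = k * Lsum f l.
Proof. induction l; simpl; [ring| rewrite IHl; ring]. Qed.

Lemma Lsum_plus {A} (f g : A -> R) l : Lsum (fun a => f a + g a) l = Lsum f l + Lsum g l.
Proof. induction l; simpl; [ring| rewrite IHl; ring]. Qed.

Lemma Lsum_le {A} (f g : A -> R) l : (forall a, In a l -> f a <= g a) -> Lsum f l <= Lsum g l.
Proof. induction l; simpl; intros H. lra. apply Rplus_le_compat; auto. Qed.

Lemma Lsum_ext {A} (f g : A -> R) l : (forall a, In a l -> f a = g a) -> Lsum f l = Lsum g l.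
Proof. induction l; simpl; intros H. auto. rewrite H, IHl; auto. Qed.

Lemma Lsum_nonneg {A} (f : A -> R) l : (forall a, In a l -> 0 <= f a) -> 0 <= Lsum f l.
Proof. induction l; simpl; intros H. lra. pose proof (H a (or_introl eq_refl)). pose proof (IHl (fun b Hb => H b (or_intror Hb))). lra. Qed.

Lemma Lsum_const {A} k (l : list A) : Lsum (fun _ => k) l = k * INR (length l).
Proof. induction l; simpl length; [simpl; ring|]. rewrite S_INR; simpl Lsum; rewrite IHl; ring. Qed.

Lemma filter_map_cons {A B} (f : B -> bool) (g : A -> B) l :
  filter f (map g l) = map g (filter (fun a => f (g a)) l).
Proof. induction l; simpl; auto. destruct (f (g a)); simpl; rewrite IHl; auto. Qed.

Lemma card_true_cons b h : card_true (b :: h) = ((if b then 1 else 0) + card_true h)%nat.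
Proof. unfold card_true; destruct b; simpl; auto. Qed.

Lemma filter_all_false {A} (f : A -> bool) l : (forall x, f x = false) -> filter f l = [].
Proof. intros H; induction l; simpl; auto. rewrite H; auto. Qed.

Lemma subs_S0 N : subs (S N) 0 = map (cons false) (subs N 0).
Proof.
  unfold subs; simpl bool_lists. rewrite filter_app, !filter_map_cons.
  rewrite (filter_all_false _ _). simpl. f_equal.
  intros x. rewrite card_true_cons. simpl. auto.
Qed.

Lemma subs_SS N m : subs (S N) (S m) = map (cons true) (subs N m) ++ map (cons false) (subs N (S m)).
Proof.
  unfold subs; simpl bool_lists. rewrite filter_app, !filter_map_cons. auto.
Qed.

Lemma subs_0 m : subs 0 m = if Nat.eqb m 0 then [[]] else [].
Proof. unfold subs; simpl. destruct m; auto. Qed.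

Lemma C_n0 n : C n 0 = 1.
Proof. unfold C. rewrite Nat.sub_0_r. change (INR (fact 0)) with 1. field. apply INR_fact_neq_0. Qed.

Lemma C_nn n : C n n = 1.
Proof. unfold C. rewrite Nat.sub_diag. change (INR (fact 0)) with 1. field. apply INR_fact_neq_0. Qed.

Lemma cnt_formula n : forall m, INR (length (subs n m)) = if Nat.leb m n then C n m else 0.
Proof.
  induction n; intros m.
  - rewrite subs_0. destruct m; simpl; auto. rewrite C_n0; auto.
  - destruct m.
    + rewrite subs_S0, length_map, IHn. simpl. rewrite !C_n0; auto.
    + rewrite subs_SS, length_app, !length_map, plus_INR, !IHn.
      destruct (lt_eq_lt_dec m n) as [[Hlt|Heq]|Hgt].
      * replace (Nat.leb m n) with true by (symmetry; apply Nat.leb_le; lia).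
        replace (Nat.leb (S m) n) with true by (symmetry; apply Nat.leb_le; lia).
        replace (Nat.leb (S m) (S n)) with true by (symmetry; apply Nat.leb_le; lia).
        apply pascal; auto.
      * subst. rewrite Nat.leb_refl. replace (Nat.leb (S n) n) with false by (symmetry; apply Nat.leb_gt; lia).
        replace (Nat.leb (S n) (S n)) with true by (symmetry; apply Nat.leb_le; lia).
        rewrite !C_nn. ring.
      * replace (Nat.leb m n) with false by (symmetry; apply Nat.leb_gt; lia).
        replace (Nat.leb (S m) n) with false by (symmetry; apply Nat.leb_gt; lia).
        replace (Nat.leb (S m) (S n)) with false by (symmetry; apply Nat.leb_gt; lia).
        ring.
Qed.

Lemma cnt_absorb n m :
  INR (S n) * INR (length (subs n m)) = INR (S m) * INR (length (subs (S n) (S m))).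
Proof.
  rewrite !cnt_formula.
  destruct (Nat.leb m n) eqn:E.
  - apply Nat.leb_le in E.
    replace (Nat.leb (S m) (S n)) with true by (symmetry; apply Nat.leb_le; lia).
    unfold C. replace (S n - S m)%nat with (n - m)%nat by lia.
    rewrite !fact_simpl, !mult_INR.
    pose proof (INR_fact_neq_0 n). pose proof (INR_fact_neq_0 m). pose proof (INR_fact_neq_0 (n-m)).
    assert (INR (S m) <> 0) by (apply not_0_INR; lia).
    field. repeat split; auto.
  - apply Nat.leb_gt in E.
    replace (Nat.leb (S m) (S n)) with false by (symmetry; apply Nat.leb_gt; lia). ring.
Qed.

Lemma subs_card N m h : In h (subs N m) -> card_true h = m.
Proof. unfold subs. rewrite filter_In. intros [_ H]. apply Nat.eqb_eq; auto. Qed.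

Lemma bool_lists_length N h : In h (bool_lists N) -> length h = N.
Proof.
  revert h; induction N; simpl; intros h H.
  - destruct H as [<-|[]]; auto.
  - apply in_app_or in H. destruct H as [H|H]; apply in_map_iff in H; destruct H as [h' [<- H]]; simpl; f_equal; auto.
Qed.

Lemma subs_length N m h : In h (subs N m) -> length h = N.
Proof. unfold subs. rewrite filter_In. intros [H _]. eapply bool_lists_length; eauto. Qed.

Lemma Ssum_bounds N : forall c lo hi, (forall i, (i < N)%nat -> lo <= c i <= hi) ->
  INR N * lo <= Ssum N c <= INR N * hi.
Proof.
  induction N; intros c lo hi H; simpl Ssum. simpl; lra.
  rewrite S_INR. assert (H0 := H 0%nat ltac:(lia)).
  assert (IH := IHN (fun i => c (S i)) lo hi (fun i Hi => H (S i) ltac:(lia))). lra.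
Qed.

Lemma mgf N : forall c m lam lo D, 0 <= D -> (forall i, (i < N)%nat -> lo <= c i <= lo + D) ->
  Lsum (fun h => exp (lam * (sel h c - INR m * (Ssum N c / INR N)))) (subs N m)
  <= INR (length (subs N m)) * exp (lam^2 * D^2 * INR N / 8).
Proof.
  induction N; intros c m lam lo D HD Hc.
  - rewrite subs_0. destruct m; simpl; [|right; ring].
    replace (lam * (0 - 0 * (0 / 0))) with 0 by ring.
    match goal with |- context [exp (?x / 8)] => replace (x/8) with 0 by field end. lra.
  - set (c' := fun i => c (S i)).
    assert (Hc' : forall i, (i < N)%nat -> lo <= c' i <= lo + D) by (intros; apply Hc; lia).
    set (E := exp (lam ^ 2 * D ^ 2 * INR N / 8)).
    assert (HE : exp (lam ^ 2 * D ^ 2 * INR (S N) / 8) = exp (lam^2 * D^2 / 8) * E).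
    { unfold E; rewrite <- exp_plus, S_INR. f_equal. field. }
    rewrite HE.
    assert (HEp : 0 < E) by apply exp_pos.
    assert (Hq : 1 <= exp (lam^2 * D^2 / 8)).
    { rewrite <- exp_0. apply exp_le_inc. assert (0 <= lam^2 * D^2) by (apply Rmult_le_pos; apply pow2_ge_0). lra. }
    destruct m as [|m].
    + rewrite subs_S0, Lsum_map, length_map.
      eapply Rle_trans.
      2:{ apply Rmult_le_compat_l. apply pos_INR. apply Rmult_le_compat_r. lra. exact Hq. }
      rewrite Rmult_1_l.
      eapply Rle_trans; [|apply (IHN c' 0%nat lam lo D HD Hc')].
      right. apply Lsum_ext. intros h _. simpl sel. f_equal. simpl INR. fold c'. ring.
    + rewrite subs_SS, Lsum_app, !Lsum_map, length_app, !length_map, plus_INR.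
      set (mu := Ssum (S N) c / INR (S N)).
      set (mu' := Ssum N c' / INR N).
      set (a := c 0%nat + INR m * mu' - INR (S m) * mu).
      set (b := INR (S m) * (mu' - mu)).
      set (A := INR (length (subs N m))).
      set (B := INR (length (subs N (S m)))).
      assert (HA : 0 <= A) by apply pos_INR. assert (HB : 0 <= B) by apply pos_INR.
      assert (IH1 := IHN c' m lam lo D HD Hc'). fold mu' E A in IH1.
      assert (IH2 := IHN c' (S m) lam lo D HD Hc'). fold mu' E B in IH2.
      assert (L1 : Lsum (fun h => exp (lam * (sel (true :: h) c - INR (S m) * mu))) (subs N m)
                   = exp (lam * a) * Lsum (fun h => exp (lam * (sel h c' - INR m * mu'))) (subs N m)).
      { rewrite <- Lsum_scal. apply Lsum_ext. intros h _. rewrite <- exp_plus. f_equal.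
        simpl sel. fold c'. unfold a. ring. }
      assert (L2 : Lsum (fun h => exp (lam * (sel (false :: h) c - INR (S m) * mu))) (subs N (S m))
                   = exp (lam * b) * Lsum (fun h => exp (lam * (sel h c' - INR (S m) * mu'))) (subs N (S m))).
      { rewrite <- Lsum_scal. apply Lsum_ext. intros h _. rewrite <- exp_plus. f_equal.
        simpl sel. fold c'. unfold b. ring. }
      rewrite L1, L2.
      assert (Hea := exp_pos (lam * a)). assert (Heb := exp_pos (lam * b)).
      eapply Rle_trans.
      { apply Rplus_le_compat; apply Rmult_le_compat_l; try lra; eassumption. }
      set (q := exp (lam ^ 2 * D ^ 2 / 8)).
      cut (exp (lam * a) * A + exp (lam * b) * B <= (A + B) * q).
      { intros Hk. assert (Hk2 := Rmult_le_compat_r E _ _ (Rlt_le _ _ HEp) Hk). lra. }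
      destruct N as [|N].
      * unfold B. rewrite subs_0. simpl length. unfold A. rewrite subs_0.
        destruct m; simpl length; simpl INR.
        -- unfold a, mu. simpl Ssum. simpl INR. 
           replace (c 0%nat + 0 * mu' - 1 * ((c 0%nat + 0) / 1)) with 0 by field.
           rewrite (Rmult_0_r lam), exp_0. unfold q. lra.
        -- rewrite Rmult_0_r. rewrite Rmult_0_r. unfold q; lra.
      * destruct (Req_dec (A + B) 0) as [HT|HT].
        { assert (A = 0) by lra. assert (B = 0) by lra. rewrite H, H0. lra. }
        assert (Habs := cnt_absorb (S N) m).
        rewrite subs_SS, length_app, !length_map, plus_INR in Habs. fold A B in Habs.
        assert (HSs : Ssum (S (S N)) c = c 0%nat + INR (S N) * mu').
        { change (Ssum (S (S N)) c) with (c 0%nat + Ssum (S N) c'). unfold mu'. field. apply not_0_INR. lia. }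
        assert (HNp : 0 < INR (S N)) by (apply lt_0_INR; lia).
        assert (HNp2 : 0 < INR (S (S N))) by (apply lt_0_INR; lia).
        assert (Hmean : (A / (A + B)) * a + (1 - A / (A + B)) * b = 0).
        { assert (HM : 0 < INR (S m)) by (apply lt_0_INR; lia).
          assert (HBe : B = INR (S (S N)) * A / INR (S m) - A) by (field_simplify; [|lra]; rewrite Habs; field; lra).
          assert (Hab0 : A * a + B * b = 0).
          { rewrite HBe. unfold a, b, mu. rewrite HSs. rewrite !S_INR in *. field. lra. }
          replace (A / (A + B) * a + (1 - A / (A + B)) * b) with ((A * a + B * b) / (A + B)) by (field; lra).
          rewrite Hab0. field. lra. }
        assert (Hp : 0 <= A / (A + B) <= 1).
        { split. apply Rmult_le_pos; [lra| left; apply Rinv_0_lt_compat; lra].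
          apply Rmult_le_reg_r with (A + B); [lra|]. field_simplify; lra. }
        assert (Hh := hoeff2 _ a b lam Hp Hmean).
        assert (Hmu' : lo <= mu' <= lo + D).
        { destruct (Ssum_bounds (S N) c' lo (lo + D) Hc') as [Hl Hu]. unfold mu'.
          split; [apply Rmult_le_reg_r with (INR (S N)); [lra|]; field_simplify; lra
                 | apply Rmult_le_reg_r with (INR (S N)); [lra|]; field_simplify; lra]. }
        assert (Hab : a - b = c 0%nat - mu') by (unfold a, b; rewrite S_INR; ring).
        assert (Hc0 := Hc 0%nat ltac:(lia)).
        assert (Hsq : lam ^ 2 * (a - b) ^ 2 / 8 <= lam ^ 2 * D ^ 2 / 8).
        { rewrite Hab. apply Rmult_le_compat_r; [lra|]. apply Rmult_le_compat_l; [apply pow2_ge_0|].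
          assert (Ha1 : - D <= c 0%nat - mu' <= D) by lra. nra. }
        assert (Hq2 : exp (lam ^ 2 * (a - b) ^ 2 / 8) <= q) by (apply exp_le_inc; exact Hsq).
        replace (exp (lam * a) * A + exp (lam * b) * B)
          with ((A + B) * (A / (A + B) * exp (lam * a) + (1 - A / (A + B)) * exp (lam * b))) by (field; lra).
        apply Rmult_le_compat_l; lra.
Qed.

Lemma fsum_S d f : fsum (S d) f = f 0%nat + fsum d (fun i => f (S i)).
Proof. unfold fsum. simpl. f_equal. rewrite <- seq_shift, map_map. auto. Qed.

Lemma Ssum_fsum d : forall f, Ssum d f = fsum d f.
Proof. induction d; intros f. reflexivity. rewrite fsum_S. simpl. rewrite IHd. auto. Qed.

Lemma sel_fsum h : forall c, sel h c = fsum (length h) (fun x => if memH h x then c x else 0).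
Proof.
  induction h as [|b h IH]; intros c. reflexivity.
  simpl length. rewrite fsum_S. simpl sel. rewrite IH. unfold memH. simpl nth. destruct b; auto.
Qed.

Lemma sel_scal h : forall c k, sel h (fun x => k * c x) = k * sel h c.
Proof. induction h as [|b h IH]; intros c k; simpl. ring. rewrite (IH (fun i => c (S i))). destruct b; ring. Qed.

Lemma sel_nonneg h : forall c, (forall x, (x < length h)%nat -> 0 <= c x) -> 0 <= sel h c.
Proof.
  induction h as [|b h IH]; intros c Hc; simpl. lra.
  assert (0 <= sel h (fun i => c (S i))) by (apply IH; intros; apply Hc; simpl; lia).
  assert (0 <= c 0%nat) by (apply Hc; simpl; lia). destruct b; lra.
Qed.

Lemma sel_le_card h : forall c K, (forall x, (x < length h)%nat -> c x <= K) -> sel h c <= INR (card_true h) * K.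
Proof.
  induction h as [|b h IH]; intros c K Hc; simpl sel. unfold card_true; simpl; lra.
  rewrite card_true_cons, plus_INR.
  assert (sel h (fun i => c (S i)) <= INR (card_true h) * K) by (apply IH; intros; apply Hc; simpl; lia).
  assert (c 0%nat <= K) by (apply Hc; simpl; lia). destruct b; simpl INR; lra.
Qed.

Lemma Ssum_scal N : forall c k, Ssum N (fun x => k * c x) = k * Ssum N c.
Proof. induction N; intros c k; simpl. ring. rewrite (IHN (fun i => c (S i))). ring. Qed.

Lemma exists_min d f : (0 < d)%nat -> exists x0, (x0 < d)%nat /\ forall x, (x < d)%nat -> f x0 <= f x.
Proof.
  induction d; intros Hd. lia.
  destruct d. exists 0%nat. split. lia. intros x Hx. replace x with 0%nat by lia. lra.
  destruct (IHd ltac:(lia)) as [x0 [Hx0 Hm]].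
  destruct (Rle_dec (f x0) (f (S d))).
  - exists x0. split. lia. intros x Hx. destruct (Nat.eq_dec x (S d)). subst; auto. apply Hm; lia.
  - exists (S d). split. lia. intros x Hx. destruct (Nat.eq_dec x (S d)). subst; lra. specialize (Hm x ltac:(lia)). lra.
Qed.

Lemma markov_exp {A} (G : A -> R) s l :
  Lsum (fun h => if Rle_dec s (G h) then 1 else 0) l * exp s <= Lsum (fun h => exp (G h)) l.
Proof.
  induction l as [|a l IH]; simpl. lra.
  rewrite Rmult_plus_distr_r. apply Rplus_le_compat; auto.
  destruct (Rle_dec s (G a)). rewrite Rmult_1_l. apply exp_le_inc; auto. rewrite Rmult_0_l. left; apply exp_pos.
Qed.

Lemma v_facts eps beta d :
  0 < eps -> 0 < beta < 1 -> INR d > 4 * (exp (2 * eps) - 1) ^ 2 * ln (2 / beta) ->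
  let v := (exp (2 * eps) - 1) * sqrt (4 / INR d * ln (2 / beta)) in
  0 < ln (2 / beta) /\ 0 < INR d /\ 0 < v < 1 /\ INR d * v^2 = 4 * (exp (2*eps) - 1)^2 * ln (2/beta).
Proof.
  intros He Hb Hd v.
  assert (HL : 0 < ln (2 / beta)).
  { rewrite <- ln_1. apply ln_increasing. lra. apply Rmult_lt_reg_r with beta. lra. field_simplify; lra. }
  assert (Hx : 1 < exp (2 * eps)) by (rewrite <- exp_0; apply exp_increasing; lra).
  assert (Hx2 : 0 < (exp (2 * eps) - 1) ^ 2) by (apply pow_lt; lra).
  assert (Hd0 : 0 < INR d).
  { assert (0 < 4 * (exp (2 * eps) - 1) ^ 2 * ln (2 / beta)) by (apply Rmult_lt_0_compat; lra). lra. }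
  assert (Hin : 0 < 4 / INR d * ln (2 / beta)).
  { apply Rmult_lt_0_compat; auto. apply Rmult_lt_0_compat. lra. apply Rinv_0_lt_compat; lra. }
  assert (Hs := sqrt_lt_R0 _ Hin).
  assert (Hv2 : v ^ 2 = (exp (2 * eps) - 1) ^ 2 * (4 / INR d * ln (2 / beta))).
  { unfold v. rewrite Rpow_mult_distr. f_equal. simpl. rewrite Rmult_1_r. apply sqrt_sqrt. lra. }
  assert (Hdv : INR d * v ^ 2 = 4 * (exp (2 * eps) - 1) ^ 2 * ln (2 / beta)).
  { rewrite Hv2. field. lra. }
  assert (Hvp : 0 < v) by (unfold v; apply Rmult_lt_0_compat; lra).
  repeat split; auto.
  assert (v ^ 2 < 1).
  { apply Rmult_lt_reg_l with (INR d). lra. rewrite Hdv. lra. }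
  nra.
Qed.

Lemma Ssum_ext N : forall f g, (forall i, (i < N)%nat -> f i = g i) -> Ssum N f = Ssum N g.
Proof. induction N; intros f g H; simpl. auto. rewrite H by lia. f_equal. apply IHN. intros; apply H; lia. Qed.

Lemma Ssum_lb N : forall c lo, (forall i, (i < N)%nat -> lo <= c i) -> INR N * lo <= Ssum N c.
Proof.
  induction N; intros c lo H; simpl Ssum. simpl; lra.
  rewrite S_INR. assert (H0 := H 0%nat ltac:(lia)).
  assert (IH := IHN (fun i => c (S i)) lo (fun i Hi => H (S i) ltac:(lia))). lra.
Qed.

Lemma sel_ext h : forall f g, (forall i, f i = g i) -> sel h f = sel h g.
Proof. induction h as [|b h IH]; intros f g H; simpl. auto. rewrite H. f_equal. apply IH. intros; apply H. Qed.

Lemma even_half d : Nat.Even d -> exists k, d = (2 * k)%nat /\ (d / 2)%nat = k.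
Proof.
  intros [k Hk]. exists k. split; auto. subst. rewrite Nat.mul_comm. apply Nat.div_mul. lia.
Qed.

Lemma exp_m2ln beta : 0 < beta -> exp (- 2 * ln (2 / beta)) = (beta / 2) ^ 2.
Proof.
  intros Hb. replace (- 2 * ln (2 / beta)) with (- ln (2/beta) + - ln (2/beta)) by ring.
  rewrite exp_plus, exp_Ropp, exp_ln. field. lra.
  apply Rmult_lt_0_compat; [lra| apply Rinv_0_lt_compat; lra].
Qed.

Lemma core d eps beta (Rz : nat -> nat -> R) y v :
  0 < eps -> 0 < beta < 1 -> Nat.Even d ->
  INR d > 4 * (exp (2 * eps) - 1) ^ 2 * ln (2 / beta) ->
  v = (exp (2 * eps) - 1) * sqrt (4 / INR d * ln (2 / beta)) ->
  (forall x, (x < d)%nat -> 0 <= Rz x y) ->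
  (forall x x', (x < d)%nat -> (x' < d)%nat -> Rz x y <= exp eps * Rz x' y) ->
  Lsum (fun h => if Leak d v h Rz y then 1 else 0) (half_subsets d)
    <= beta / 2 * INR (length (half_subsets d)).
Proof.
  intros He Hb Hev Hd Hv Hnn Hpriv.
  destruct (v_facts eps beta d He Hb Hd) as [HL [Hd0 [[Hv0 Hv1] Hdv]]].
  rewrite <- Hv in Hv0, Hv1, Hdv.
  assert (HN0 : 0 <= INR (length (half_subsets d))) by apply pos_INR.
  set (P := pU d Rz y).
  destruct (Rle_dec P 0) as [HP|HP].
  { eapply Rle_trans with (Lsum (fun _ => 0) (half_subsets d)).
    - apply Lsum_le. intros h _. unfold Leak. destruct excluded_middle_informative as [[Hl _]|]. fold P in Hl. lra. lra.
    - rewrite Lsum_const. apply Rmult_le_compat_r. lra. lra. }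
  apply Rnot_le_lt in HP.
  destruct (even_half d Hev) as [k [Hdk Hk]].
  assert (HdkR : INR d = 2 * INR k) by (rewrite Hdk, mult_INR; simpl; ring).
  assert (Hk0 : 0 < INR k) by lra.
  assert (Hdn : (0 < d)%nat) by (apply INR_lt; simpl; lra).
  set (w := fun x => Rz x y / P).
  assert (Hfs : fsum d (fun x => Rz x y) = INR d * P).
  { unfold P, pU. field. lra. }
  assert (HSw : Ssum d w = INR d).
  { unfold w. rewrite (Ssum_ext d _ (fun x => / P * Rz x y)) by (intros; field; lra).
    rewrite Ssum_scal, Ssum_fsum, Hfs. field. lra. }
  destruct (exists_min d w Hdn) as [x0 [Hx0 Hmin]].
  set (w0 := w x0).
  assert (Hwnn : forall x, (x < d)%nat -> 0 <= w x).
  { intros x Hx. unfold w. apply Rmult_le_pos. auto. left; apply Rinv_0_lt_compat; lra. }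
  assert (Hw01 : w0 <= 1).
  { assert (Hl := Ssum_lb d w w0 Hmin). rewrite HSw in Hl.
    apply Rmult_le_reg_l with (INR d); lra. }
  set (D0 := exp eps - 1).
  assert (HD0 : 0 < D0).
  { assert (Hee : exp 0 < exp eps) by (apply exp_increasing; lra). rewrite exp_0 in Hee. unfold D0; lra. }
  assert (Hw0nn : 0 <= w0) by (apply Hwnn; auto).
  assert (Hrange : forall i, (i < d)%nat -> w0 <= w i <= w0 + D0).
  { intros i Hi. split. apply Hmin; auto.
    assert (Hp := Hpriv i x0 Hi Hx0).
    assert (w i <= exp eps * w0).
    { unfold w0, w. unfold Rdiv. rewrite <- Rmult_assoc. apply Rmult_le_compat_r; auto.
      left; apply Rinv_0_lt_compat; lra. }
    assert (0 <= D0 * (1 - w0)) by (apply Rmult_le_pos; lra). replace (exp eps * w0) with (w0 + D0 * w0) in H by (unfold D0; ring). nra. }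
  set (X := fun h => sel h w - INR k).
  set (t := INR d * v / 4).
  set (lam := 4 * t / (D0 ^ 2 * INR d)).
  set (s := lam * t).
  assert (Ht : 0 < t) by (unfold t; apply Rmult_lt_0_compat; [apply Rmult_lt_0_compat|]; lra).
  assert (HD2 : 0 < D0 ^ 2 * INR d) by (apply Rmult_lt_0_compat; [apply pow_lt|]; lra).
  assert (Hlam : 0 < lam) by (unfold lam; apply Rmult_lt_0_compat; [lra| apply Rinv_0_lt_compat; lra]).
  assert (Hpt : forall h, In h (half_subsets d) ->
     (if Leak d v h Rz y then 1 else 0) <=
     (if Rle_dec s (lam * X h) then 1 else 0) + (if Rle_dec s (- lam * X h) then 1 else 0)).
  { intros h Hh.
    assert (Hlen : length h = d) by (eapply subs_length; exact Hh).
    assert (Hcard : card_true h = k) by (rewrite <- Hk; eapply subs_card; exact Hh).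
    assert (Hge0 : forall (b : bool), 0 <= (if b then 1 else 0)) by (intros []; lra).
    unfold Leak. destruct excluded_middle_informative as [[_ Hl]|Hn].
    2:{ destruct (Rle_dec s (lam * X h)), (Rle_dec s (- lam * X h)); lra. }
    assert (HpUH : pUH d Rz h y = P * (sel h w / INR k)).
    { unfold pUH. rewrite Hcard, <- Hlen, <- sel_fsum.
      unfold w. rewrite (sel_ext h (fun x => Rz x y / P) (fun x => / P * Rz x y)) by (intros; field; lra).
      rewrite sel_scal. field. lra. }
    fold P in Hl. rewrite HpUH in Hl.
    set (S := sel h w) in *.
    assert (HSnn : 0 <= S) by (unfold S; apply sel_nonneg; rewrite Hlen; auto).
    assert (Htk : t = INR k * v / 2) by (unfold t; rewrite HdkR; field).
    assert (Hdev : t <= X h \/ X h <= - t).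
    { unfold X; fold S.
      destruct (Req_dec S 0) as [HS0|HS0].
      { right. rewrite HS0, Htk. nra. }
      assert (Hr : 0 < S / INR k) by (apply Rmult_lt_0_compat; [lra| apply Rinv_0_lt_compat; lra]).
      replace (P * (S / INR k) / P) with (S / INR k) in Hl by (field; lra).
      destruct Hl as [H0|Habs].
      { exfalso. apply Rmult_integral in H0. destruct H0; lra. }
      unfold Rabs in Habs. destruct (Rcase_abs (ln (S / INR k))) as [Hneg|Hpos].
      - right. assert (Hlt : S / INR k < exp (- v)).
        { rewrite <- (exp_ln (S / INR k)) by lra. apply exp_increasing. lra. }
        assert (He1 := exp_ineq1_le v).
        assert (Hinv : exp (- v) <= / (1 + v)).
        { rewrite exp_Ropp. apply Rinv_le_contravar; lra. }
        assert (Hinv2 : / (1 + v) <= 1 - v / 2).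
        { apply Rmult_le_reg_l with (1 + v). lra. rewrite Rinv_r by lra. nra. }
        assert (S < INR k * (1 - v / 2)).
        { apply Rmult_lt_reg_r with (/ INR k). apply Rinv_0_lt_compat; lra.
          replace (INR k * (1 - v / 2) * / INR k) with (1 - v/2) by (field; lra).
          replace (S * / INR k) with (S / INR k) by (field; lra). lra. }
        rewrite Htk. nra.
      - left. assert (Hlt : exp v < S / INR k).
        { rewrite <- (exp_ln (S / INR k)) by lra. apply exp_increasing. lra. }
        assert (He1 := exp_ineq1_le v).
        assert (INR k * (1 + v) < S).
        { apply Rmult_lt_reg_r with (/ INR k). apply Rinv_0_lt_compat; lra.
          replace (INR k * (1 + v) * / INR k) with (1 + v) by (field; lra).
          replace (S * / INR k) with (S / INR k) by (field; lra). lra. }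
        rewrite Htk. nra. }
    destruct Hdev as [Hu|Hlo].
    - assert (s <= lam * X h) by (unfold s; apply Rmult_le_compat_l; lra).
      destruct (Rle_dec s (lam * X h)); [|contradiction]. destruct (Rle_dec s (- lam * X h)); lra.
    - assert (s <= - lam * X h) by (unfold s; nra).
      destruct (Rle_dec s (- lam * X h)); [|contradiction]. destruct (Rle_dec s (lam * X h)); lra. }
  assert (Hhs : half_subsets d = subs d k) by (unfold half_subsets, subs; rewrite Hk; reflexivity).
  set (N := INR (length (half_subsets d))) in *.
  set (Q := lam ^ 2 * D0 ^ 2 * INR d / 8).
  assert (Hmgf : forall l, l ^ 2 = lam ^ 2 -> Lsum (fun h => exp (l * X h)) (half_subsets d) <= N * exp Q).
  { intros l Hl2. assert (Hm := mgf d w k l w0 D0 (Rlt_le _ _ HD0) Hrange).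
    rewrite <- Hhs in Hm. fold N in Hm. rewrite Hl2 in Hm. fold Q in Hm.
    rewrite HSw in Hm. replace (INR d / INR d) with 1 in Hm by (field; lra).
    eapply Rle_trans; [|exact Hm]. right. apply Lsum_ext. intros h _. unfold X. f_equal. f_equal. ring. }
  assert (Hexp : exp Q / exp s <= (beta / 2) ^ 2).
  { replace (exp Q / exp s) with (exp (Q + - s)) by (rewrite exp_plus, exp_Ropp; field; apply Rgt_not_eq, exp_pos).
    rewrite <- exp_m2ln by lra. apply exp_le_inc.
    assert (HQs : Q + - s = - (2 * t ^ 2 / (D0 ^ 2 * INR d))) by (unfold Q, s, lam; field; lra).
    rewrite HQs.
    assert (H2e : exp (2 * eps) - 1 = D0 * (D0 + 2)).
    { replace (2 * eps) with (eps + eps) by ring. rewrite exp_plus. unfold D0. ring. }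
    assert (Hval : 2 * t ^ 2 / (D0 ^ 2 * INR d) = (D0 + 2) ^ 2 * ln (2 / beta) / 2).
    { unfold t. apply Rmult_eq_reg_l with (D0 ^ 2 * 8). 2: { apply Rmult_integral_contrapositive; split; [apply pow_nonzero|]; lra. }
      replace (D0 ^ 2 * 8 * (2 * (INR d * v / 4) ^ 2 / (D0 ^ 2 * INR d))) with (INR d * v ^ 2) by (field; lra).
      rewrite Hdv, H2e. field. }
    rewrite Hval. assert (4 <= (D0 + 2) ^ 2) by nra. nra. }
  eapply Rle_trans.
  { apply Lsum_le. exact Hpt. }
  rewrite Lsum_plus.
  assert (Hm1 := markov_exp (fun h => lam * X h) s (half_subsets d)).
  assert (Hm2 := markov_exp (fun h => - lam * X h) s (half_subsets d)).
  cbv beta in Hm1, Hm2.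
  assert (Hs := exp_pos s).
  assert (HeQ := exp_pos Q).
  set (I1 := Lsum (fun h => if Rle_dec s (lam * X h) then 1 else 0) (half_subsets d)) in *.
  set (I2 := Lsum (fun h => if Rle_dec s (- lam * X h) then 1 else 0) (half_subsets d)) in *.
  assert (HB1 : I1 * exp s <= N * exp Q) by (eapply Rle_trans; [exact Hm1| apply Hmgf; ring]).
  assert (HB2 : I2 * exp s <= N * exp Q) by (eapply Rle_trans; [exact Hm2| apply Hmgf; ring]).
  assert (HI1 : I1 <= N * (exp Q / exp s)).
  { apply Rmult_le_reg_r with (exp s). lra. replace (N * (exp Q / exp s) * exp s) with (N * exp Q) by (field; lra). lra. }
  assert (HI2 : I2 <= N * (exp Q / exp s)).
  { apply Rmult_le_reg_r with (exp s). lra. replace (N * (exp Q / exp s) * exp s) with (N * exp Q) by (field; lra). lra. }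
  assert (Hb2 : 2 * (beta / 2) ^ 2 <= beta / 2) by nra.
  assert (N * (exp Q / exp s) <= N * (beta / 2) ^ 2) by (apply Rmult_le_compat_l; lra).
  nra.
Qed.

Lemma Sum_is (f : nat -> R) (l : R) : is_series f l -> Sum f = l.
Proof.
  intros H. apply is_series_Reals in H. unfold Sum.
  assert (Hs := ClassicalEpsilon.epsilon_spec (inhabits 0%R) (fun l => infinite_sum f l) (ex_intro _ l H)).
  cbv beta in Hs. eapply uniqueness_sum; eauto.
Qed.

Lemma Sum_Series f : ex_series f -> Sum f = Series f.
Proof. intros H. apply Sum_is. apply Series_correct; auto. Qed.

Lemma ex_series_dom (f g : nat -> R) : (forall y, 0 <= f y <= g y) -> ex_series g -> ex_series f.
Proof. intros H Hg. apply (ex_series_le f g); auto. intros y. rewrite Rabs_pos_eq; apply H. Qed.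

Lemma is_series_zero : is_series (fun _ : nat => 0) 0.
Proof.
  apply is_series_Reals. intros e He. exists 0%nat. intros N _.
  assert (Hz : sum_f_R0 (fun _ : nat => 0) N = 0) by (induction N; simpl; [auto| rewrite IHN; ring]).
  unfold Rfunctions.R_dist. rewrite Hz, Rminus_diag, Rabs_R0. lra.
Qed.

Lemma fsum_series d : forall (F : nat -> nat -> R), (forall x, (x < d)%nat -> is_series (F x) 1) ->
  is_series (fun y => fsum d (fun x => F x y)) (INR d).
Proof.
  induction d; intros F HF.
  - simpl. apply (is_series_ext (fun _ => 0)). intros; reflexivity. apply is_series_zero.
  - apply (is_series_ext (fun y => plus (F 0%nat y) (fsum d (fun x => F (S x) y)))).
    { intros y. rewrite fsum_S. reflexivity. }
    rewrite S_INR. replace (INR d + 1) with (plus 1 (INR d)) by (unfold plus; simpl; ring).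
    apply (@is_series_plus R_AbsRing R_NormedModule). apply HF; lia. apply IHd. intros; apply HF; lia.
Qed.

Lemma pU_series d Rz : (0 < d)%nat -> is_randomizer d Rz -> is_series (pU d Rz) 1.
Proof.
  intros Hd HR. unfold pU.
  apply (is_series_ext (fun y => scal (/ INR d) (fsum d (fun x => Rz x y)))). intros; reflexivity.
  replace 1 with (scal (/ INR d) (INR d)).
  2: { unfold scal; simpl; unfold mult; simpl. field. apply not_0_INR; lia. }
  apply (@is_series_scal R_AbsRing R_NormedModule). apply fsum_series. intros x Hx. apply is_series_Reals. apply HR; auto.
Qed.

Lemma fsum_nonneg d : forall f, (forall x, (x < d)%nat -> 0 <= f x) -> 0 <= fsum d f.
Proof.
  induction d; intros f H. unfold fsum; simpl; lra.
  rewrite fsum_S. assert (0 <= f 0%nat) by (apply H; lia).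
  assert (0 <= fsum d (fun i => f (S i))) by (apply IHd; intros; apply H; lia). lra.
Qed.

Lemma pU_nonneg d Rz y : is_randomizer d Rz -> 0 <= pU d Rz y.
Proof.
  intros HR. unfold pU. apply Rmult_le_pos. destruct d. simpl. rewrite Rinv_0; lra.
  left; apply Rinv_0_lt_compat, lt_0_INR; lia.
  apply fsum_nonneg. intros; apply HR; auto.
Qed.

Lemma sum_delta (f : nat -> R) y N :
  sum_f_R0 (fun z => if Nat.eqb z y then f z else 0) N = if Nat.leb y N then f y else 0.
Proof.
  induction N; cbn [sum_f_R0].
  - destruct (Nat.eqb_spec 0 y); destruct (Nat.leb_spec y 0); subst; try lia; auto.
  - rewrite IHN. destruct (Nat.eqb_spec (S N) y); destruct (Nat.leb_spec y N); destruct (Nat.leb_spec y (S N));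
      subst; try lia; ring.
Qed.

Lemma PrIn_delta (f : nat -> R) y : PrIn f (fun z => Nat.eqb z y) = f y.
Proof.
  unfold PrIn. apply Sum_is. apply is_series_Reals.
  intros e He. exists y. intros N HN. unfold Rfunctions.R_dist. rewrite sum_delta.
  replace (Nat.leb y N) with true by (symmetry; apply Nat.leb_le; lia).
  rewrite Rminus_diag, Rabs_R0. lra.
Qed.

Lemma priv_point d eps Rz y x x' : eps_private d eps Rz -> (x < d)%nat -> (x' < d)%nat ->
  Rz x y <= exp eps * Rz x' y.
Proof.
  intros Hp Hx Hx'. assert (H := Hp x x' (fun z => Nat.eqb z y) Hx Hx').
  rewrite !PrIn_delta in H. auto.
Qed.

Lemma Lsum_filter {X} (p : X -> bool) l : INR (length (filter p l)) = Lsum (fun h => if p h then 1 else 0) l.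
Proof. induction l; simpl. auto. destruct (p a); simpl length; try rewrite S_INR; rewrite IHl; ring. Qed.

Lemma Lsum_compl {X} (p : X -> bool) l :
  Lsum (fun h => if p h then 1 else 0) l + Lsum (fun h => if p h then 0 else 1) l = INR (length l).
Proof. induction l; simpl Lsum. simpl; ring. simpl length. rewrite S_INR. destruct (p a); lra. Qed.

Lemma Ssum_ge_term n : forall f j, (forall i, (i < n)%nat -> 0 <= f i) -> (j < n)%nat -> f j <= Ssum n f.
Proof.
  induction n; intros f j H Hj. lia. simpl Ssum.
  assert (0 <= Ssum n (fun i => f (S i))).
  { rewrite <- (Rmult_0_r (INR n)). apply Ssum_lb. intros; apply H; lia. }
  destruct j. assert (0 <= f 0%nat) by (apply H; lia). lra.
  assert (f (S j) <= Ssum n (fun i => f (S i))) by (apply (IHn (fun i => f (S i))); [intros; apply H|]; lia).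
  assert (0 <= f 0%nat) by (apply H; lia). lra.
Qed.

Lemma Lsum_Ssum {X} n : forall (F : nat -> X -> R) l,
  Lsum (fun h => Ssum n (fun i => F i h)) l = Ssum n (fun i => Lsum (F i) l).
Proof.
  induction n; intros F l; simpl.
  - rewrite Lsum_const. ring.
  - rewrite Lsum_plus. f_equal. apply (IHn (fun i => F (S i))).
Qed.

Lemma Ssum_le n : forall f g, (forall i, (i < n)%nat -> f i <= g i) -> Ssum n f <= Ssum n g.
Proof.
  induction n; intros f g H; simpl. lra.
  apply Rplus_le_compat. apply H; lia. apply IHn. intros; apply H; lia.
Qed.

Lemma Ssum_const n c : Ssum n (fun _ => c) = INR n * c.
Proof. induction n; simpl Ssum. simpl; ring. rewrite IHn, S_INR. ring. Qed.

Lemma Lsum_series {X} (f : X -> nat -> R) l : (forall h, In h l -> ex_series (f h)) ->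
  ex_series (fun y => Lsum (fun h => f h y) l) /\
  Lsum (fun h => Series (f h)) l = Series (fun y => Lsum (fun h => f h y) l).
Proof.
  induction l as [|a l IH]; intros Hex; simpl.
  - split. exists 0. apply is_series_zero. symmetry. apply is_series_unique. apply is_series_zero.
  - destruct (IH (fun h Hh => Hex h (or_intror Hh))) as [He Heq].
    assert (Ha := Hex a (or_introl eq_refl)).
    split.
    + apply (@ex_series_plus R_AbsRing R_NormedModule); auto.
    + rewrite Heq. rewrite Series_plus; auto.
Qed.

Lemma markov_lin {X} (G : X -> R) T l : 0 <= T -> (forall h, In h l -> 0 <= G h) ->
  Lsum (fun h => if Rle_dec T (G h) then 1 else 0) l * T <= Lsum G l.
Proof.
  intros HT. induction l as [|a l IH]; simpl; intros H. lra.
  rewrite Rmult_plus_distr_r. apply Rplus_le_compat; [|apply IH; auto].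
  assert (0 <= G a) by auto. destruct (Rle_dec T (G a)); lra.
Qed.

Lemma pUH_bound d eps Rz h y : is_randomizer d Rz -> eps_private d eps Rz ->
  length h = d -> (0 < card_true h)%nat ->
  0 <= pUH d Rz h y <= exp eps * pU d Rz y.
Proof.
  intros HR HP Hl Hc.
  assert (Hx : forall x, (x < d)%nat -> Rz x y <= exp eps * pU d Rz y).
  { intros x Hx.
    assert (H1 := Ssum_lb d (fun x' => exp eps * Rz x' y) (Rz x y) (fun x' Hx' => priv_point d eps Rz y x x' HP Hx Hx')).
    rewrite Ssum_scal, Ssum_fsum in H1.
    assert (Hd : 0 < INR d) by (apply lt_0_INR; lia).
    unfold pU. apply Rmult_le_reg_l with (INR d). lra.
    replace (INR d * (exp eps * (/ INR d * fsum d (fun x0 => Rz x0 y)))) with (exp eps * fsum d (fun x0 => Rz x0 y)) by (field; lra).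
    lra. }
  unfold pUH. replace (fsum d (fun x => if memH h x then Rz x y else 0)) with (sel h (fun x => Rz x y)) by (rewrite sel_fsum, Hl; reflexivity).
  assert (Hcp : 0 < INR (card_true h)) by (apply lt_0_INR; lia).
  split.
  - apply Rmult_le_pos. left; apply Rinv_0_lt_compat; lra. apply sel_nonneg. intros; apply HR; lia.
  - assert (Hs := sel_le_card h (fun x => Rz x y) (exp eps * pU d Rz y) ltac:(intros; apply Hx; lia)).
    apply Rmult_le_reg_l with (INR (card_true h)). lra.
    replace (INR (card_true h) * (/ INR (card_true h) * sel h (fun x => Rz x y))) with (sel h (fun x => Rz x y)) by (field; lra).
    lra.
Qed.

Lemma half_props d h : Nat.Even d -> (0 < d)%nat -> In h (half_subsets d) -> length h = d /\ (0 < card_true h)%nat.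
Proof.
  intros Hev Hd Hh. destruct (even_half d Hev) as [k [Hdk Hk]].
  assert (Hhs : half_subsets d = subs d k) by (unfold half_subsets, subs; rewrite Hk; reflexivity).
  rewrite Hhs in Hh. split. eapply subs_length; eauto. rewrite (subs_card _ _ _ Hh). lia.
Qed.

Lemma sums_bound d eps beta Rz v :
  0 < eps -> 0 < beta < 1 -> Nat.Even d ->
  INR d > 4 * (exp (2 * eps) - 1) ^ 2 * ln (2 / beta) ->
  v = (exp (2 * eps) - 1) * sqrt (4 / INR d * ln (2 / beta)) ->
  is_randomizer d Rz -> eps_private d eps Rz ->
  (forall h, In h (half_subsets d) -> 0 <= PrIn (pU d Rz) (Leak d v h Rz) /\ 0 <= PrIn (pUH d Rz h) (Leak d v h Rz)) /\
  Lsum (fun h => PrIn (pU d Rz) (Leak d v h Rz)) (half_subsets d) <= beta / 2 * INR (length (half_subsets d)) /\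
  Lsum (fun h => PrIn (pUH d Rz h) (Leak d v h Rz)) (half_subsets d) <= exp eps * (beta / 2) * INR (length (half_subsets d)).
Proof.
  intros He Hb Hev Hd Hv HR HP.
  destruct (v_facts eps beta d He Hb Hd) as [_ [Hd0 _]].
  assert (Hdn : (0 < d)%nat) by (apply INR_lt; simpl; lra).
  assert (HpU := pU_series d Rz Hdn HR).
  assert (HpUn : forall y, 0 <= pU d Rz y) by (intros; apply pU_nonneg; auto).
  assert (Hee : 0 < exp eps) by apply exp_pos.
  set (L := half_subsets d).
  set (N := INR (length L)).
  assert (Hcore : forall y, Lsum (fun h => if Leak d v h Rz y then 1 else 0) L <= beta / 2 * N).
  { intros y. apply (core d eps beta Rz y v He Hb Hev Hd Hv).
    - intros x Hx. apply HR; auto.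
    - intros x x' Hx Hx'. apply (priv_point d eps Rz y x x' HP Hx Hx'). }
  set (g := fun h y => if Leak d v h Rz y then pU d Rz y else 0).
  set (f := fun h y => if Leak d v h Rz y then pUH d Rz h y else 0).
  assert (Hg : forall h y, 0 <= g h y <= pU d Rz y) by (intros h y; pose proof (HpUn y); unfold g; destruct Leak; lra).
  assert (Hf : forall h y, In h L -> 0 <= f h y <= exp eps * pU d Rz y).
  { intros h y Hh. destruct (half_props d h Hev Hdn Hh) as [Hl Hc].
    assert (Hb' := pUH_bound d eps Rz h y HR HP Hl Hc).
    unfold f; cbv beta; destruct Leak. lra. split. lra. apply Rmult_le_pos; [lra|apply HpUn]. }
  assert (HexpU : ex_series (pU d Rz)) by (exists 1; auto).
  assert (HexepU : ex_series (fun y => exp eps * pU d Rz y)).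
  { exists (scal (exp eps) 1). apply (@is_series_scal R_AbsRing R_NormedModule). auto. }
  assert (Hexg : forall h, ex_series (g h)) by (intros; apply (ex_series_dom _ _ (Hg h)); auto).
  assert (Hexf : forall h, In h L -> ex_series (f h)) by (intros h Hh; apply (ex_series_dom _ _ (fun y => Hf h y Hh)); auto).
  assert (HPg : forall h, PrIn (pU d Rz) (Leak d v h Rz) = Series (g h)) by (intros; unfold PrIn; apply Sum_Series; apply Hexg).
  assert (HPf : forall h, In h L -> PrIn (pUH d Rz h) (Leak d v h Rz) = Series (f h)) by (intros; unfold PrIn; apply Sum_Series; apply Hexf; auto).
  split; [|split].
  - intros h Hh. rewrite HPg, HPf by auto. split.
    + rewrite <- (is_series_unique _ _ is_series_zero). apply Series_le. intros y; split; [lra|apply Hg]. apply Hexg.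
    + rewrite <- (is_series_unique _ _ is_series_zero). apply Series_le. intros y; split; [lra|apply Hf; auto]. apply Hexf; auto.
  - rewrite (Lsum_ext _ (fun h => Series (g h))) by (intros; apply HPg).
    destruct (Lsum_series g L (fun h _ => Hexg h)) as [Hex Heq]. rewrite Heq.
    eapply Rle_trans.
    { apply (Series_le _ (fun y => beta / 2 * N * pU d Rz y)).
      - intros y. split. apply Lsum_nonneg. intros; apply Hg.
        replace (Lsum (fun h => g h y) L) with (pU d Rz y * Lsum (fun h => if Leak d v h Rz y then 1 else 0) L).
        + rewrite Rmult_comm. apply Rmult_le_compat_r; auto.
        + rewrite <- Lsum_scal. apply Lsum_ext. intros h _. unfold g. destruct Leak; ring.
      - exists (scal (beta / 2 * N) 1). apply (@is_series_scal R_AbsRing R_NormedModule). auto. }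
    rewrite Series_scal_l, (is_series_unique _ _ HpU). lra.
  - rewrite (Lsum_ext _ (fun h => Series (f h))) by (intros; apply HPf; auto).
    destruct (Lsum_series f L Hexf) as [Hex Heq]. rewrite Heq.
    eapply Rle_trans.
    { apply (Series_le _ (fun y => exp eps * (beta / 2) * N * pU d Rz y)).
      - intros y. split. apply Lsum_nonneg. intros; apply Hf; auto.
        apply Rle_trans with (Lsum (fun h => exp eps * pU d Rz y * (if Leak d v h Rz y then 1 else 0)) L).
        + apply Lsum_le. intros h Hh. destruct (Hf h y Hh). unfold f in *. destruct Leak; lra.
        + rewrite Lsum_scal. replace (exp eps * (beta / 2) * N * pU d Rz y) with (exp eps * pU d Rz y * (beta / 2 * N)) by ring.
          apply Rmult_le_compat_l; auto. apply Rmult_le_pos; auto; lra.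
      - exists (scal (exp eps * (beta / 2) * N) 1). apply (@is_series_scal R_AbsRing R_NormedModule). auto. }
    rewrite Series_scal_l, (is_series_unique _ _ HpU). lra.
Qed.


Theorem mainTheorem8 (eps beta : R) (d n : nat) (Rs : nat -> nat -> nat -> R) :
  0 < eps ->
  0 < beta < 1 ->
  Nat.Even d ->
  INR d > 4 * (exp (2 * eps) - 1) ^ 2 * ln (2 / beta) ->
  (forall i, (i < n)%nat -> is_randomizer d (Rs i) /\ eps_private d eps (Rs i)) ->
  let v := (exp (2 * eps) - 1) * sqrt (4 / INR d * ln (2 / beta)) in
  PrH d (fun h =>
    (forall i, (i < n)%nat ->
       PrIn (pU d (Rs i)) (Leak d v h (Rs i)) < 6 * beta * INR n) /\
    (forall i, (i < n)%nat ->
       PrIn (pUH d (Rs i) h) (Leak d v h (Rs i)) < 6 * exp eps * beta * INR n))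
  >= 5 / 6.
Proof.
  intros He Hb Hev Hd HRs v.
  destruct (v_facts eps beta d He Hb Hd) as [_ [Hd0 _]].
  assert (Hdn : (0 < d)%nat) by (apply INR_lt; simpl; lra).
  destruct (even_half d Hev) as [k [Hdk Hk]].
  assert (Hhs : half_subsets d = subs d k) by (unfold half_subsets, subs; rewrite Hk; reflexivity).
  set (L := half_subsets d).
  set (N := INR (length L)).
  assert (HN : 0 < N).
  { unfold N, L. rewrite Hhs, cnt_formula. replace (Nat.leb k d) with true by (symmetry; apply Nat.leb_le; lia).
    unfold C. apply Rmult_lt_0_compat. apply INR_fact_lt_0. apply Rinv_0_lt_compat.
    apply Rmult_lt_0_compat; apply INR_fact_lt_0. }
  set (X := fun i h => PrIn (pU d (Rs i)) (Leak d v h (Rs i))).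
  set (Y := fun i h => PrIn (pUH d (Rs i) h) (Leak d v h (Rs i))).
  set (Good := fun h => (forall i, (i < n)%nat -> X i h < 6 * beta * INR n) /\
                        (forall i, (i < n)%nat -> Y i h < 6 * exp eps * beta * INR n)).
  assert (Main : Lsum (fun h => if to_bool (Good h) then 1 else 0) L / N >= 5/6).
  2:{ unfold PrH. rewrite Lsum_filter. exact Main. }
  assert (Hc := Lsum_compl (fun h => to_bool (Good h)) L). fold N in Hc.
  set (G := Lsum (fun h => if to_bool (Good h) then 1 else 0) L) in *.
  set (Bd := Lsum (fun h => if to_bool (Good h) then 0 else 1) L) in *.
  cut (Bd <= N / 6).
  { intros HB. apply Rle_ge. apply Rmult_le_reg_r with N; auto.
    replace (G / N * N) with G by (field; lra). lra. }
  destruct (Nat.eq_dec n 0) as [Hn0|Hn0].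
  { unfold Bd. rewrite (Lsum_ext _ (fun _ => 0)).
    - rewrite Lsum_const. lra.
    - intros h _. unfold to_bool. destruct excluded_middle_informative as [|Hng]; auto.
      exfalso; apply Hng. split; intros; lia. }
  assert (Hnp : 0 < INR n) by (apply lt_0_INR; lia).
  assert (Hee : 0 < exp eps) by apply exp_pos.
  set (T1 := 6 * beta * INR n). set (T2 := 6 * exp eps * beta * INR n).
  assert (HT1 : 0 < T1) by (unfold T1; repeat apply Rmult_lt_0_compat; lra).
  assert (HT2 : 0 < T2) by (unfold T2; repeat apply Rmult_lt_0_compat; lra).
  set (F := fun i h => (if Rle_dec T1 (X i h) then 1 else 0) + (if Rle_dec T2 (Y i h) then 1 else 0)).
  assert (HF0 : forall i h, 0 <= F i h) by (intros; unfold F; destruct Rle_dec, Rle_dec; lra).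
  assert (Hpt : forall h, In h L -> (if to_bool (Good h) then 0 else 1) <= Ssum n (fun i => F i h)).
  { intros h Hh. unfold to_bool. destruct excluded_middle_informative as [Hg|Hng].
    - rewrite <- (Rmult_0_r (INR n)). apply Ssum_lb. intros; apply HF0.
    - unfold Good in Hng. apply not_and_or in Hng. destruct Hng as [Hng|Hng]; apply not_all_ex_not in Hng;
        destruct Hng as [i Hi]; apply imply_to_and in Hi; destruct Hi as [Hi Hlt]; apply Rnot_lt_le in Hlt.
      + eapply Rle_trans; [|apply (Ssum_ge_term n (fun i => F i h) i); auto].
        unfold F. destruct (Rle_dec T1 (X i h)); [|contradiction]. destruct Rle_dec; lra.
      + eapply Rle_trans; [|apply (Ssum_ge_term n (fun i => F i h) i); auto].
        unfold F. destruct (Rle_dec T2 (Y i h)); [|contradiction]. destruct Rle_dec; lra. }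
  unfold Bd. eapply Rle_trans; [apply Lsum_le; exact Hpt|].
  rewrite (Lsum_Ssum n F L).
  eapply Rle_trans; [apply (Ssum_le n _ (fun _ => N / (6 * INR n)))|].
  - intros i Hi. destruct (HRs i Hi) as [HR HP].
    destruct (sums_bound d eps beta (Rs i) v He Hb Hev Hd eq_refl HR HP) as [Hnn [HsX HsY]].
    fold L N in Hnn, HsX, HsY. fold (X i) in HsX. fold (Y i) in HsY.
    unfold F. rewrite Lsum_plus.
    assert (M1 := markov_lin (X i) T1 L (Rlt_le _ _ HT1) (fun h Hh => proj1 (Hnn h Hh))).
    assert (M2 := markov_lin (Y i) T2 L (Rlt_le _ _ HT2) (fun h Hh => proj2 (Hnn h Hh))).
    set (I1 := Lsum (fun h => if Rle_dec T1 (X i h) then 1 else 0) L) in *.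
    set (I2 := Lsum (fun h => if Rle_dec T2 (Y i h) then 1 else 0) L) in *.
    assert (I1 <= N / (12 * INR n)).
    { apply Rmult_le_reg_r with T1; auto. unfold T1 at 2.
      replace (N / (12 * INR n) * (6 * beta * INR n)) with (beta / 2 * N) by (field; lra). lra. }
    assert (I2 <= N / (12 * INR n)).
    { apply Rmult_le_reg_r with T2; auto. unfold T2 at 2.
      replace (N / (12 * INR n) * (6 * exp eps * beta * INR n)) with (exp eps * (beta / 2) * N) by (field; lra). lra. }
    replace (N / (6 * INR n)) with (N / (12 * INR n) + N / (12 * INR n)) by (field; lra). lra.
  - rewrite Ssum_const. right. field. lra.
Qed.
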